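(* Let $\mu \in X^*(\underline{T})$ be a character. \begin{enumerate} \item $\Lambda_W^\mu$ is the set of $\omega'\in \Lambda_W$ such that $\mathrm{Trns}_{\mu}(\omega', \underline{A}) \in \underline{C}_0 / (p-\pi)X^0(\underline{T})$. In particular, $\mathrm{Trns}_{\mu}(\omega', \underline{A})$ is $p$-regular (since our alcoves are open). \item For any $a\in \mathcal{A}$ and $\omega'\in \Lambda_W^\mu$, the image of $\mathrm{Trns}'_\mu(\omega',a)$ in $\Lambda_W$ is $p$-regular, in the same $\widetilde{\underline{W}}^{\mathrm{der}}$-orbit (for the dot action) as $\omega'+\overline{\mu-\eta}$ and is in alcove $\pi^{-1}(a)$. Moreover, there exists $\widetilde{w}\in \underline{W}_a^{\mathrm{der}}$ such that \[ \mathrm{Trns}_\mu(\omega',a)\equiv \widetilde{w}\cdot \big(\mu-\eta+(1-p\pi^{-1})\circ\mathrm{sec}(\omega')\big)\ \mod (p-\pi)X^0(\underline{T}) \] (note that $\underline{W}_a^{\mathrm{der}}$ acts naturally via the $p$-dot action on $X^*(\underline{T})/(p-\pi)X^0(\underline{T})$). \item $(\mathrm{Trns}_\mu(\omega',a)-\mu+\eta)|_{\underline{Z}}=(\mathrm{Trns}_\mu(\omega',a)-\mu)|_{\underline{Z}}\in (p-\pi)X^*(\underline{Z})$. \end{enumerate}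
   Context: Let $\underline{G}=(\mathrm{Res}_{\mathbb{F}_{p^f}/\mathbb{F}_p}\mathrm{GL}_3)\times\mathbb{F}\cong\mathrm{GL}_3^f$ with diagonal torus $\underline T$ and center $\underline Z$, $X^*(\underline T)\cong(\mathbb{Z}^3)^f$, $\eta=((1,0,-1))_i$, $\pi$ the Frobenius shift $(\pi\lambda)_i=\lambda_{i-1}$. Let $\Lambda_W$, $\Lambda_R$ be the weight and root lattices of $\underline G^{\mathrm{der}}\cong\mathrm{SL}_3^f$, $\lambda\mapsto\overline\lambda$ the restriction $X^*(\underline T)\to\Lambda_W$ with kernel $X^0(\underline T)$, $\mathrm{can}:\Lambda_R\to\ker(X^*(\underline T)\to X^*(\underline Z))$ the canonical isomorphism (identifying $\underline W_a^{\mathrm{der}}$ with the affine Weyl group of $\underline G$), and $\mathrm{sec}:\Lambda_W\to X^*(\underline T)$ a fixed section. All actions of (extended) affine Weyl groups are $p$-dot actions $t_\lambda w\cdot\mu=p\lambda+w(\mu+\eta)-\eta$. $\underline{A}$ is the lowest dominant $p$-restricted alcove for $\mathrm{SL}_3^f$, $\underline C_0$ the lowest dominant alcove in $X^*(\underline T)\otimes\mathbb R$, $\mathcal A=\{A,B\}^f$ the dominant $p$-restricted alcoves, $\widetilde{\underline W}^{+,\mathrm{der}}_1$ the elements of $\Lambda_W\rtimes S_3^f$ taking $\underline A$ into $\mathcal A$ (written $wt_{-\pi^{-1}\omega}$). Every element of $\Lambda_W\times\mathcal A$ is uniquely $(\omega+\nu,\pi wt_{-\pi^{-1}\omega}\cdot\underline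 A)$ with $\nu\in\Lambda_R$, $wt_{-\pi^{-1}\omega}\in\widetilde{\underline W}^{+,\mathrm{der}}_1$, and one defines $\mathrm{Trns}'_\mu(\omega+\nu,\pi wt_{-\pi^{-1}\omega}\cdot\underline A)=wt_{-\pi^{-1}\mathrm{sec}(\omega)}\cdot(\mu-\eta+\mathrm{can}(\nu)+\mathrm{sec}(\omega))\in X^*(\underline T)$ and $\mathrm{Trns}_\mu$ its image in $X^*(\underline T)/(p-\pi)X^0(\underline T)$ (independent of $\mathrm{sec}$). $\Lambda_W^\mu=\{\omega\in\Lambda_W:\omega+\overline{\mu-\eta}\in\underline A\}$. A weight $\lambda$ is $p$-regular if $\langle\lambda+\eta,\alpha^\vee\rangle\notin p\mathbb{Z}$ for all positive roots $\alpha$. *)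

(* Defs.v *)
From Stdlib Require Import Rdefinitions ClassicalEpsilon.
From HB Require Import structures.
From mathcomp Require Import all_boot all_order all_algebra all_fingroup.
From mathcomp Require Import Rstruct.
Set Implicit Arguments. Unset Strict Implicit. Unset Printing Implicit Defensive.
Import Order.TTheory GRing.Theory Num.Theory.
Local Open Scope ring_scope.

(* G = GL_3^f.  A character lambda in X^*(T) = (Z^3)^f is an
   f x 3 integer matrix (row i = i-th GL_3 factor).  The weight lattice
   Lambda_W of SL_3^f is identified with (Z^2)^f via the coordinates
   (<lambda,alpha_1^vee>, <lambda,alpha_2^vee>) (an f x 2 matrix); the
   restriction map X^*(T) -> Lambda_W is [resW].  Real points of
   Lambda_W (x) R are f x 2 real matrices. *)

Section Defs.
Variable f : nat.
Variable p : nat.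

Notation XT := 'M[int]_(f, 3).
Notation LW := 'M[int]_(f, 2).

Definition piM {R : Type} {n : nat} (l : 'M[R]_(f, n)) : 'M[R]_(f, n) :=
  \matrix_(i, j) l (ord_pred i) j.
Definition piinvM {R : Type} {n : nat} (l : 'M[R]_(f, n)) : 'M[R]_(f, n) :=
  \matrix_(i, j) l (ordS i) j.

Definition resW {R : zmodType} (l : 'M[R]_(f, 3)) : 'M[R]_(f, 2) :=
  \matrix_(i, j) (if (j : nat) == 0%N then l i (inord 0) - l i (inord 1)
                  else l i (inord 1) - l i (inord 2)).
(* a lift Lambda_W -> X^*(T) (used only to transport the Weyl action) *)
Definition liftW {R : zmodType} (x : 'M[R]_(f, 2)) : 'M[R]_(f, 3) :=
  \matrix_(i, j) (if (j : nat) == 0%N then x i (inord 0) + x i (inord 1)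
                  else if (j : nat) == 1%N then x i (inord 1) else 0).

(* restriction X^*(T) -> X^*(Z) = Z^f *)
Definition resZ (l : XT) : 'M[int]_(f, 1) :=
  \matrix_(i, j) (l i (inord 0) + l i (inord 1) + l i (inord 2)).

Definition actX {R : Type} (w : 'I_f -> 'S_3) (l : 'M[R]_(f, 3)) : 'M[R]_(f, 3) :=
  \matrix_(i, j) l i ((w i)^-1 j)%g.
Definition actL {R : zmodType} (w : 'I_f -> 'S_3) (x : 'M[R]_(f, 2)) :=
  resW (actX w (liftW x)).

Definition etaX : XT :=
  \matrix_(i, j) (if (j : nat) == 0%N then 1 else if (j : nat) == 1%N then 0 else -1).
Definition etaL {R : nzRingType} : 'M[R]_(f, 2) := \matrix_(i, j) 1.

Definition wt_dotX (w : 'I_f -> 'S_3) (lam x : XT) : XT :=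
  actX w ((p%:Z) *: lam + x + etaX) - etaX.
Definition wt_dotL {R : comNzRingType} (w : 'I_f -> 'S_3) (lam x : 'M[R]_(f, 2)) :=
  actL w (p%:R *: lam + x + etaL) - etaL.
Definition tw_dotL (lam : LW) (w : 'I_f -> 'S_3) (x : LW) : LW :=
  p%:Z *: lam + actL w (x + etaL) - etaL.

(* root lattice Lambda_R inside Lambda_W *)
Definition inLR (nu : LW) : Prop := forall i, dvdz 3 (nu i (inord 0) - nu i (inord 1)).
(* canonical isomorphism Lambda_R -> ker(X^*(T) -> X^*(Z)):
   nu = m alpha_1 + n alpha_2  |->  (m, n - m, -n) in each factor *)
Definition can (nu : LW) : XT :=
  \matrix_(i, j)
   (let m := divz (2 * nu i (inord 0) + nu i (inord 1)) 3 in
    let n := divz (nu i (inord 0) + 2 * nu i (inord 1)) 3 in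
    if (j : nat) == 0%N then m else if (j : nat) == 1%N then n - m else - n).
(* p-dot action of the affine Weyl group W_a^der = Lambda_R x| S_3^f on
   X^*(T), via can:  t_nu w . l = p can(nu) + w(l + eta) - eta *)
Definition Wa_dotX (nu : LW) (w : 'I_f -> 'S_3) (l : XT) : XT :=
  p%:Z *: can nu + actX w (l + etaX) - etaX.

(* congruence modulo (p - pi) X^0(T); X^0(T) = characters constant on each factor *)
Definition X0 (c : 'M[int]_(f, 1)) : XT := \matrix_(i, j) c i 0.
Definition congrX (l1 l2 : XT) : Prop :=
  exists c : 'M[int]_(f, 1), l1 - l2 = p%:Z *: X0 c - piM (X0 c).

Inductive AB := AlcA | AlcB.
Definition alcf := 'I_f -> AB.
Definition Aunder : alcf := fun _ => AlcA.
Definition piinv_alc (a : alcf) : alcf := fun i => a (ordS i).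

Definition in_alc (a : alcf) (x : 'M[R]_(f, 2)) : Prop :=
  forall i, let y0 := x i (inord 0) + 1 in let y1 := x i (inord 1) + 1 in
  match a i with
  | AlcA => 0 < y0 /\ 0 < y1 /\ y0 + y1 < p%:R
  | AlcB => p%:R < y0 + y1 /\ y0 < p%:R /\ y1 < p%:R
  end.
Definition toR (x : LW) : 'M[R]_(f, 2) := map_mx intr x.

Definition maps_A_to (w : 'I_f -> 'S_3) (lam : LW) (b : alcf) : Prop :=
  forall y : 'M[R]_(f, 2),
    in_alc b y <-> exists x, in_alc Aunder x /\ y = wt_dotL w (toR lam) x.

(* w t_{-pi^{-1} om} in \tilde W_1^{+,der}: it takes A into a restricted alcove *)
Definition inW1 (w : 'I_f -> 'S_3) (om : LW) : Prop :=
  exists b : alcf, maps_A_to w (- piinvM om) b.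

(* (om2, a) = (om + nu, pi w t_{-pi^{-1} om} . A) *)
Definition decomp (om2 : LW) (a : alcf)
    (d : LW * LW * ('I_f -> 'S_3)) : Prop :=
  let: (om, nu, w) := d in
  [/\ om2 = om + nu, inLR nu, inW1 w om & maps_A_to w (- piinvM om) (piinv_alc a)].

Definition Trnsp (mu : XT) (sec : LW -> XT) (om2 : LW) (a : alcf) : XT :=
  let: (om, nu, w) :=
     epsilon (inhabits (0, 0, fun _ => 1%g)) (decomp om2 a) in
  wt_dotX w (- piinvM (sec om)) (mu - etaX + can nu + sec om).

(* lowest dominant alcove C_0 (integral points), modulo (p - pi) X^0 *)
Definition inC0 (l : XT) : Prop := in_alc Aunder (toR (resW l)).
Definition inC0mod (l : XT) : Prop := exists l', congrX l' l /\ inC0 l'.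

Definition pregL (x : LW) : Prop :=
  forall i, ~~ dvdz p%:Z (x i (inord 0) + 1) /\ ~~ dvdz p%:Z (x i (inord 1) + 1)
            /\ ~~ dvdz p%:Z (x i (inord 0) + x i (inord 1) + 2).
Definition pregX (l : XT) : Prop := pregL (resW l).

Definition LWmu (mu : XT) (om : LW) : Prop := in_alc Aunder (toR (om + resW (mu - etaX))).

End Defs.

(* Main.v *)
Require Import Defs.
From Stdlib Require Import Rdefinitions ClassicalEpsilon.
From HB Require Import structures.
From mathcomp Require Import all_boot all_order all_algebra all_fingroup.
From mathcomp Require Import Rstruct.
From mathcomp Require Import ring lra zify.
Set Implicit Arguments. Unset Strict Implicit. Unset Printing Implicit Defensive.
Import Order.TTheory GRing.Theory Num.Theory.
Local Open Scope ring_scope.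

Lemma ord3 (k : 'I_3) : k = inord 0 \/ k = inord 1 \/ k = inord 2.
Proof.
case: k => [[|[|[|?]]] Hk] //; [left|right;left|right;right]; apply: val_inj; by rewrite /= inordK.
Qed.
Lemma ord2 (k : 'I_2) : k = inord 0 \/ k = inord 1.
Proof.
case: k => [[|[|?]] Hk] //; [left|right]; apply: val_inj; by rewrite /= inordK.
Qed.
Lemma inv0 n : ((inord 0 : 'I_n.+1) : nat) = 0%N. Proof. by rewrite inordK. Qed.
Lemma inv1 n : ((inord 1 : 'I_n.+2) : nat) = 1%N. Proof. by rewrite inordK. Qed.
Lemma inv2 n : ((inord 2 : 'I_n.+3) : nat) = 2%N. Proof. by rewrite inordK. Qed.

Local Notation actX := Defs.actX.

Definition sof (a b c : nat) : 'I_3 -> 'I_3 := fun j => inord (nth 0%N [:: a; b; c] j).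
Ltac sofinj := move=> [[|[|[|?]]] Hx] [[|[|[|?]]] Hy] //= /(congr1 val); rewrite /sof /= !inordK // => E; by apply: val_inj.
Lemma sof012 : injective (sof 0 1 2). Proof. sofinj. Qed.
Lemma sof201 : injective (sof 2 0 1). Proof. sofinj. Qed.
Lemma sof120 : injective (sof 1 2 0). Proof. sofinj. Qed.
Lemma sof210 : injective (sof 2 1 0). Proof. sofinj. Qed.
Lemma sof102 : injective (sof 1 0 2). Proof. sofinj. Qed.
Lemma sof021 : injective (sof 0 2 1). Proof. sofinj. Qed.

Definition lrep (c : int) (b : AB) : int * int :=
  if c == 0 then (match b with AlcA => (0, 0) | AlcB => (-1, -1) end)
  else if c == 1 then (match b with AlcA => (-1, 0) | AlcB => (1, -1) end)
  else (match b with AlcA => (0, -1) | AlcB => (-1, 1) end).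
Definition pcode (c : int) (b : AB) : {perm 'I_3} :=
  if c == 0 then (match b with AlcA => perm sof012 | AlcB => perm sof210 end)
  else if c == 1 then (match b with AlcA => perm sof120 | AlcB => perm sof021 end)
  else (match b with AlcA => perm sof201 | AlcB => perm sof102 end).

Definition alc_row (p : nat) (t : AB) (x0 x1 : R) : Prop :=
  let y0 := x0 + 1 in let y1 := x1 + 1 in
  match t with
  | AlcA => 0 < y0 /\ 0 < y1 /\ y0 + y1 < p%:R
  | AlcB => p%:R < y0 + y1 /\ y0 < p%:R /\ y1 < p%:R
  end.

Section G.
Variable f : nat.

Lemma in_alcE p (b : alcf f) x : in_alc p b x <-> forall i, alc_row p (b i) (x i (inord 0)) (x i (inord 1)).
Proof. by []. Qed.

Lemma resWE (R : zmodType) (l : 'M[R]_(f,3)) i j : resW l i j =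
  if (j : nat) == 0%N then l i (inord 0) - l i (inord 1) else l i (inord 1) - l i (inord 2).
Proof. by rewrite mxE. Qed.
Lemma actXE (R : Type) (w : 'I_f -> {perm 'I_3}) (l : 'M[R]_(f,3)) i j : actX w l i j = l i ((w i)^-1 j)%g.
Proof. by rewrite mxE. Qed.
Lemma liftWE (R : zmodType) (x : 'M[R]_(f,2)) i k : liftW x i k =
  if (k : nat) == 0%N then x i (inord 0) + x i (inord 1)
  else if (k : nat) == 1%N then x i (inord 1) else 0.
Proof. by rewrite mxE. Qed.


Lemma liftW_resW (R : zmodType) (l : 'M[R]_(f,3)) i k :
  liftW (resW l) i k = l i k - l i (inord 2).
Proof.
rewrite !mxE; case: (ord3 k) => [->|[->|->]]; rewrite ?inv0 ?inv1 ?inv2 /= ?mxE ?inv0 ?inv1 ?inv2 /=.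
- by rewrite addrA subrK.
- by [].
- by rewrite subrr.
Qed.

Lemma resW_liftW (R : zmodType) (x : 'M[R]_(f,2)) : resW (liftW x) = x.
Proof.
apply/matrixP=> i j; rewrite !mxE; case: (ord2 j) => [->|->]; rewrite ?inv0 ?inv1 ?inv2 /= ?mxE ?inv0 ?inv1 ?inv2 /=.
- by rewrite addrK.
- by rewrite subr0.
Qed.

Lemma resW_actX (R : zmodType) (w : 'I_f -> {perm 'I_3}) (l : 'M[R]_(f,3)) : resW (actX w l) = actL w (resW l).
Proof.
apply/matrixP=> i j; rewrite /actL !resWE !actXE !liftW_resW.
case: ifP => _; rewrite opprB addrA subrK //.
Qed.
Definition Lf (R : zmodType) (U : 'M[R]_(f,2)) i (k : nat) :=
  if k == 0%N then U i (inord 0) + U i (inord 1) else if k == 1%N then U i (inord 1) else 0.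

Lemma actL_sof (R : zmodType) (w : 'I_f -> {perm 'I_3}) (U : 'M[R]_(f,2)) i a b c
  (H : forall j, ((w i)^-1)%g j = sof a b c j) : (a < 3)%N -> (b < 3)%N -> (c < 3)%N ->
  actL w U i (inord 0) = Lf U i a - Lf U i b /\ actL w U i (inord 1) = Lf U i b - Lf U i c.
Proof.
move=> Ha Hb Hc.
by rewrite /actL !resWE inv0 inv1 /= !actXE !H /sof inv0 inv1 inv2 /= !liftWE !inordK.
Qed.

Lemma wtE p (R : comNzRingType) w (lam x : 'M[R]_(f,2)) i k :
  wt_dotL p w lam x i k = actL w (p%:R *: lam + x + etaL f) i k - 1.
Proof. rewrite /wt_dotL; set A := actL _ _; by rewrite !mxE. Qed.

Lemma row_ok p c b (w : 'I_f -> {perm 'I_3}) (lam : 'M[int]_(f,2)) i :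
  w i = (pcode c b)^-1%g -> lam i (inord 0) = (lrep c b).1 -> lam i (inord 1) = (lrep c b).2 ->
  forall x : 'M[R]_(f,2), alc_row p AlcA (x i (inord 0)) (x i (inord 1)) <->
    alc_row p b (wt_dotL p w (toR lam) x i (inord 0)) (wt_dotL p w (toR lam) x i (inord 1)).
Proof.
move=> Hw Hl0 Hl1 x; rewrite !wtE.
have Hw' : forall j, ((w i)^-1)%g j = pcode c b j by move=> j; rewrite Hw invgK.
clear Hw; move: Hw' Hl0 Hl1; rewrite /lrep /pcode.
case: ifP => _; [|case: ifP => _]; case: b => /= Hw' Hl0 Hl1;
  (have [-> ->] := actL_sof (R:=R) (p%:R *: toR lam + x + etaL f) (fun j => etrans (Hw' j) (permE _ _)) isT isT isT);
  rewrite /Lf /= !mxE Hl0 Hl1 /= ?rmorphN ?rmorph1 ?rmorph0;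
  split; case=> H1 [H2 H3]; (split; [lra|split; lra]).
Qed.

Lemma actL_lin (R : comNzRingType) (w : 'I_f -> {perm 'I_3}) (a : R) (x y : 'M[R]_(f,2)) :
  actL w (a *: x + y) = a *: actL w x + actL w y.
Proof.
apply/matrixP=> i j; rewrite /actL [RHS]mxE [X in _ = X + _]mxE !resWE !actXE !liftWE !mxE.
by do ![case: ifP => _]; ring.
Qed.
Lemma actLD (R : comNzRingType) (w : 'I_f -> {perm 'I_3}) (x y : 'M[R]_(f,2)) :
  actL w (x + y) = actL w x + actL w y.
Proof. by rewrite -[x]scale1r actL_lin !scale1r. Qed.
Lemma actL0 (R : comNzRingType) (w : 'I_f -> {perm 'I_3}) : actL w (0 : 'M[R]_(f,2)) = 0.
Proof. by apply/matrixP=> i j; rewrite /actL !resWE !actXE !liftWE !mxE; do ![case: ifP => _]; ring. Qed.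
Lemma actLZ (R : comNzRingType) (w : 'I_f -> {perm 'I_3}) a (x : 'M[R]_(f,2)) :
  actL w (a *: x) = a *: actL w x.
Proof. by rewrite -[a *: x]addr0 actL_lin actL0 addr0. Qed.
Lemma actLN (R : comNzRingType) (w : 'I_f -> {perm 'I_3}) (x : 'M[R]_(f,2)) :
  actL w (- x) = - actL w x.
Proof. by rewrite -scaleN1r actLZ scaleN1r. Qed.

Lemma actX_comp (R : Type) (w w' : 'I_f -> {perm 'I_3}) (l : 'M[R]_(f,3)) :
  (forall i, (w' i * w i = 1)%g) -> actX w (actX w' l) = l.
Proof.
move=> H; apply/matrixP=> i j; rewrite !actXE.
by rewrite -permM -invMg H invg1 perm1.
Qed.

Lemma actL_comp (R : zmodType) (w w' : 'I_f -> {perm 'I_3}) (y : 'M[R]_(f,2)) :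
  (forall i, (w' i * w i = 1)%g) -> actL w (actL w' y) = y.
Proof. by move=> H; rewrite {2}/actL -resW_actX actX_comp // resW_liftW. Qed.

Definition winv (w : 'I_f -> {perm 'I_3}) := fun i => ((w i)^-1)%g.

Lemma wt_inv p (R : comNzRingType) (w : 'I_f -> {perm 'I_3}) (lam y : 'M[R]_(f,2)) :
  wt_dotL p w lam (actL (winv w) (y + etaL f) - etaL f - p%:R *: lam) = y.
Proof.
rewrite /wt_dotL.
have -> : p%:R *: lam + (actL (winv w) (y + etaL f) - etaL f - p%:R *: lam) + etaL f
   = actL (winv w) (y + etaL f) by apply/matrixP=> i j; rewrite !mxE; ring.
rewrite actL_comp; last by move=> i; rewrite /winv mulVg.
by rewrite addrK.
Qed.

Lemma wt_inj p (R : comNzRingType) (w : 'I_f -> {perm 'I_3}) (lam x x' : 'M[R]_(f,2)) :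
  wt_dotL p w lam x = wt_dotL p w lam x' -> x = x'.
Proof.
rewrite /wt_dotL => /addIr E.
have := congr1 (actL (winv w)) E; rewrite !actL_comp; last by move=> i; rewrite /winv mulgV.
2: by move=> i; rewrite /winv mulgV.
by move/addIr/addrI.
Qed.

Lemma maps_of_rows p (w : 'I_f -> {perm 'I_3}) (lamI : 'M[int]_(f,2)) (b : alcf f) :
  (forall i (x : 'M[R]_(f,2)), alc_row p AlcA (x i (inord 0)) (x i (inord 1)) <->
    alc_row p (b i) (wt_dotL p w (toR lamI) x i (inord 0)) (wt_dotL p w (toR lamI) x i (inord 1))) ->
  maps_A_to p w lamI b.
Proof.
move=> H y; split.
- move=> Hy; exists (actL (winv w) (y + etaL f) - etaL f - p%:R *: toR lamI).
  rewrite wt_inv; split=> // i; apply/(H i); rewrite wt_inv; exact: Hy i.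
- by case=> x [Hx ->] i; apply/(H i); exact: Hx i.
Qed.

Definition cls (om2 : 'M[int]_(f,2)) j : int := ((om2 j (inord 0) - om2 j (inord 1)) %% 3)%Z.
Definition omsel (om2 : 'M[int]_(f,2)) (a : alcf f) : 'M[int]_(f,2) :=
  \matrix_(j, k) - (if (k : nat) == 0%N then (lrep (cls om2 j) (a j)).1 else (lrep (cls om2 j) (a j)).2).
Definition wsel (om2 : 'M[int]_(f,2)) (a : alcf f) : 'I_f -> {perm 'I_3} :=
  fun i => ((pcode (cls om2 (ordS i)) (a (ordS i)))^-1)%g.

Lemma decomp_ex p (om2 : 'M[int]_(f,2)) (a : alcf f) : exists d, decomp p om2 a d.
Proof.
have HM : maps_A_to p (wsel om2 a) (- piinvM (omsel om2 a)) (piinv_alc a).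
  apply: maps_of_rows => i x.
  apply: (@row_ok p (cls om2 (ordS i)) (a (ordS i))) => //.
  - by rewrite !mxE inv0 /= opprK.
  - by rewrite !mxE inv1 /= opprK.
exists (omsel om2 a, om2 - omsel om2 a, wsel om2 a); split.
- by rewrite addrC subrK.
- move=> i; apply/dvdz_mod0P; rewrite !mxE inv0 inv1 /=.
  set d := om2 i (inord 0) - om2 i (inord 1).
  have -> : om2 i (inord 0) - - (lrep (cls om2 i) (a i)).1 - (om2 i (inord 1) - - (lrep (cls om2 i) (a i)).2)
     = d + ((lrep (cls om2 i) (a i)).1 - (lrep (cls om2 i) (a i)).2) by rewrite /d; ring.
  rewrite -modzDml /cls -/d.
  have : (0 <= (d %% 3)%Z) && ((d %% 3)%Z < 3) by rewrite modz_ge0 // ltz_pmod.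
  move: (d %% 3)%Z => c Hc.
  have : c = 0 \/ c = 1 \/ c = 2 by lia.
  by case=> [->|[->|->]]; case: (a i).
- by exists (piinv_alc a).
- exact: HM.
Qed.

Lemma Trnsp_spec p mu sec (om2 : 'M[int]_(f,2)) (a : alcf f) :
  exists om nu w, decomp p om2 a (om, nu, w) /\
    Trnsp p mu sec om2 a = wt_dotX p w (- piinvM (sec om)) (mu - etaX f + can nu + sec om).
Proof.
rewrite /Trnsp.
have := epsilon_spec (inhabits (0, 0, fun _ => 1%g)) (decomp p om2 a) (decomp_ex p om2 a).
case: (epsilon _ _) => [[om nu] w] H.
by exists om, nu, w.
Qed.

Lemma resW_lin (R : comNzRingType) (a : R) (x y : 'M[R]_(f,3)) :
  resW (a *: x + y) = a *: resW x + resW y.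
Proof.
apply/matrixP=> i j; rewrite [RHS]mxE [X in _ = X + _]mxE !resWE !mxE.
by case: ifP => _; ring.
Qed.
Lemma resW0 (R : comNzRingType) : resW (0 : 'M[R]_(f,3)) = 0.
Proof. by apply/matrixP=> i j; rewrite !resWE !mxE; case: ifP => _; ring. Qed.
Lemma resWD (R : comNzRingType) (x y : 'M[R]_(f,3)) : resW (x + y) = resW x + resW y.
Proof. by rewrite -[x]scale1r resW_lin !scale1r. Qed.
Lemma resWZ (R : comNzRingType) a (x : 'M[R]_(f,3)) : resW (a *: x) = a *: resW x.
Proof. by rewrite -[a *: x]addr0 resW_lin resW0 addr0. Qed.
Lemma resWN (R : comNzRingType) (x : 'M[R]_(f,3)) : resW (- x) = - resW x.
Proof. by rewrite -scaleN1r resWZ scaleN1r. Qed.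
Lemma resWB (R : comNzRingType) (x y : 'M[R]_(f,3)) : resW (x - y) = resW x - resW y.
Proof. by rewrite resWD resWN. Qed.
Lemma resW_eta : resW (etaX f) = etaL f.
Proof. by apply/matrixP=> i j; rewrite resWE !mxE inv0 inv1 inv2 /=; case: ifP => _. Qed.
Lemma resW_piinv (R : zmodType) (l : 'M[R]_(f,3)) : resW (piinvM l) = piinvM (resW l).
Proof. by apply/matrixP=> i j; rewrite !mxE. Qed.

Lemma resW_can (nu : 'M[int]_(f,2)) : inLR nu -> resW (can nu) = nu.
Proof.
move=> H; apply/matrixP=> i j; rewrite resWE !mxE inv0 inv1 inv2 /=.
have /dvdzP [t Ht] := H i.
set a := nu i (inord 0) in Ht *; set b := nu i (inord 1) in Ht *.
have -> : 2 * a + b = (a - t) * 3 by lia.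
have -> : a + 2 * b = (b + t) * 3 by lia.
rewrite !mulzK //.
case: (ord2 j) => -> ; rewrite ?inv0 ?inv1 /=; lia.
Qed.

Lemma resW_wtX p (w : 'I_f -> {perm 'I_3}) (lam X : 'M[int]_(f,3)) :
  resW (wt_dotX p w lam X) = wt_dotL p w (resW lam) (resW X).
Proof.
by rewrite /wt_dotX /wt_dotL resWB resW_actX !resWD resWZ resW_eta natz.
Qed.

Lemma map_actL (w : 'I_f -> {perm 'I_3}) (x : 'M[int]_(f,2)) : toR (actL w x) = actL w (toR x).
Proof.
apply/matrixP=> i j; rewrite /toR mxE /actL !resWE !actXE !liftWE !mxE.
by do ![case: ifP => _]; rewrite ?rmorphB ?rmorphD ?rmorph0.
Qed.

Lemma toRB (A B : 'M[int]_(f,2)) : toR (A - B) = toR A - toR B.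
Proof. by apply/matrixP=> i j; rewrite !mxE rmorphB. Qed.
Lemma toRD (A B : 'M[int]_(f,2)) : toR (A + B) = toR A + toR B.
Proof. by apply/matrixP=> i j; rewrite !mxE rmorphD. Qed.
Lemma toRZ (c : int) (A : 'M[int]_(f,2)) : toR (c *: A) = (c%:~R : R) *: toR A.
Proof. by apply/matrixP=> i j; rewrite !mxE rmorphM. Qed.
Lemma toR_eta : toR (etaL f) = etaL f.
Proof. by apply/matrixP=> i j; rewrite !mxE rmorph1. Qed.

Lemma toR_wt p (w : 'I_f -> {perm 'I_3}) (lam x : 'M[int]_(f,2)) :
  toR (wt_dotL p w lam x) = wt_dotL p w (toR lam) (toR x).
Proof.
by rewrite /wt_dotL toRB map_actL !toRD toRZ toR_eta rmorph_nat.
Qed.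

Lemma wt_tw p (w : 'I_f -> {perm 'I_3}) (lam x : 'M[int]_(f,2)) :
  wt_dotL p w lam x = tw_dotL p (actL w lam) w x.
Proof. by rewrite /wt_dotL /tw_dotL -[p%:R *: lam + x + _]addrA actLD actLZ natz. Qed.

Lemma resW_congr p (l1 l2 : 'M[int]_(f,3)) : congrX p l1 l2 -> resW l1 = resW l2.
Proof.
case=> c Hc; apply/matrixP=> i j.
have E k : l1 i k = l2 i k + (p%:Z * c i 0 - c (ord_pred i) 0).
  by have := congr1 (fun M : 'M[int]_(f,3) => M i k) Hc; rewrite !mxE => <-; ring.
by rewrite !resWE !E; case: ifP => _; ring.
Qed.

Lemma ndvd1 (p : nat) (y : int) : 0 < y -> y < p%:Z -> ~~ dvdz p%:Z y.
Proof.
case: y => [n|n] //= H1 H2; rewrite /dvdz /=.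
apply/negP => /dvdn_leq; lia.
Qed.
Lemma ndvd2 (p : nat) (y : int) : p%:Z < y -> y < 2 * p%:Z -> ~~ dvdz p%:Z y.
Proof.
case: y => [n|n] //= H1 H2; rewrite /dvdz /=.
have -> : n = (p + (n - p))%N by lia.
apply/negP; rewrite dvdn_addr // => /dvdn_leq H; have := H ltac:(lia); lia.
Qed.

Lemma preg_of_alc p (b : alcf f) (Y : 'M[int]_(f,2)) : in_alc p b (toR Y) -> pregL p Y.
Proof.
move=> H i; have := H i; rewrite /toR !mxE.
have Ep : (p%:R : R) = (p%:Z)%:~R by rewrite -pmulrn.
have E1 (z : int) : (z%:~R : R) + 1 = (z + 1)%:~R by rewrite rmorphD rmorph1.
rewrite Ep !E1.
have E2 (z z' : int) : (z%:~R : R) + z'%:~R = (z + z')%:~R by rewrite rmorphD.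
have Es : Y i (inord 0) + Y i (inord 1) + 2 = (Y i (inord 0) + 1) + (Y i (inord 1) + 1) by ring.
rewrite Es; case: (b i) => /=; rewrite !E2 ?ltr_int ?ltr0z => -[h1 [h2 h3]].
- by split; [|split]; apply: ndvd1; lia.
- by split; [|split]; [apply: ndvd1|apply: ndvd1|apply: ndvd2]; lia.
Qed.

Lemma sum3 (F : 'I_3 -> int) : \sum_k F k = F (inord 0) + F (inord 1) + F (inord 2).
Proof.
rewrite !big_ord_recl big_ord0 addr0 addrA.
by congr (F _ + F _ + F _); apply: val_inj; rewrite /= ?inordK.
Qed.

Lemma resZE (l : 'M[int]_(f,3)) i j : resZ l i j = l i (inord 0) + l i (inord 1) + l i (inord 2).
Proof. by rewrite mxE. Qed.

Lemma resZ_actX (w : 'I_f -> {perm 'I_3}) (l : 'M[int]_(f,3)) : resZ (actX w l) = resZ l.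
Proof.
apply/matrixP=> i j; rewrite !resZE !actXE.
rewrite -(sum3 (fun k => l i k)).
transitivity (\sum_k l i (((w i)^-1)%g k)); first by rewrite sum3.
by rewrite [RHS](reindex_inj (@perm_inj _ ((w i)^-1)%g)).
Qed.

Lemma resZ_lin (a : int) (x y : 'M[int]_(f,3)) : resZ (a *: x + y) = a *: resZ x + resZ y.
Proof. by apply/matrixP=> i j; rewrite !mxE; ring. Qed.
Lemma resZ0 : resZ (0 : 'M[int]_(f,3)) = 0.
Proof. by apply/matrixP=> i j; rewrite !mxE; ring. Qed.
Lemma resZD (x y : 'M[int]_(f,3)) : resZ (x + y) = resZ x + resZ y.
Proof. by rewrite -[x]scale1r resZ_lin !scale1r. Qed.
Lemma resZZ a (x : 'M[int]_(f,3)) : resZ (a *: x) = a *: resZ x.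
Proof. by rewrite -[a *: x]addr0 resZ_lin resZ0 addr0. Qed.
Lemma resZN (x : 'M[int]_(f,3)) : resZ (- x) = - resZ x.
Proof. by rewrite -scaleN1r resZZ scaleN1r. Qed.
Lemma resZB (x y : 'M[int]_(f,3)) : resZ (x - y) = resZ x - resZ y.
Proof. by rewrite resZD resZN. Qed.
Lemma resZ_eta : resZ (etaX f) = 0.
Proof. by apply/matrixP=> i j; rewrite !mxE inv0 inv1 inv2 /=. Qed.
Lemma resZ_can (nu : 'M[int]_(f,2)) : resZ (can nu) = 0.
Proof. by apply/matrixP=> i j; rewrite !mxE inv0 inv1 inv2 /=; ring. Qed.
Lemma resZ_piinv (l : 'M[int]_(f,3)) : resZ (piinvM l) = piinvM (resZ l).
Proof. by apply/matrixP=> i j; rewrite !mxE. Qed.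

Lemma can_resW (v : 'M[int]_(f,3)) : resZ v = 0 -> can (resW v) = v /\ inLR (resW v).
Proof.
move=> H.
have Hi i : v i (inord 2) = - v i (inord 0) - v i (inord 1).
  have := congr1 (fun M : 'M[int]_(f,1) => M i 0) H; rewrite !mxE; lia.
split.
- apply/matrixP=> i k; rewrite !mxE ?inv0 ?inv1 /= ?inv0 ?inv1 ?inv2 /= Hi.
  have -> : 2 * (v i (inord 0) - v i (inord 1)) + (v i (inord 1) - (- v i (inord 0) - v i (inord 1)))
     = v i (inord 0) * 3 by ring.
  have -> : v i (inord 0) - v i (inord 1) + 2 * (v i (inord 1) - (- v i (inord 0) - v i (inord 1)))
     = (v i (inord 0) + v i (inord 1)) * 3 by ring.
  rewrite !mulzK //.
  case: (ord3 k) => [->|[->|->]]; rewrite ?inv0 ?inv1 ?inv2 /= ?Hi; ring.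
- move=> i; rewrite !mxE inv0 inv1 /= Hi.
  apply/dvdzP; exists (- v i (inord 1)); ring.
Qed.

Lemma resW0_const (u : 'M[int]_(f,3)) : resW u = 0 -> forall i k, u i k = u i (inord 2).
Proof.
move=> H i k.
have H0 := congr1 (fun M : 'M[int]_(f,2) => M i (inord 0)) H.
have H1 := congr1 (fun M : 'M[int]_(f,2) => M i (inord 1)) H.
rewrite /= !mxE inv0 inv1 /= in H0 H1.
case: (ord3 k) => [->|[->|->]] //; lia.
Qed.
End G.

Theorem proposition2p4 (f p : nat) (Hf : (0 < f)%N) (Hp : prime p)
    (sec : 'M[int]_(f, 2) -> 'M[int]_(f, 3))
    (Hsec : forall om : 'M[int]_(f, 2), resW (sec om) = om)
    (mu : 'M[int]_(f, 3)) :
  (* (1) *)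
  (forall om' : 'M[int]_(f, 2),
      LWmu p mu om' <-> inC0mod p (Trnsp p mu sec om' (@Aunder f))) /\
  (forall om' : 'M[int]_(f, 2),
      LWmu p mu om' -> pregX p (Trnsp p mu sec om' (@Aunder f))) /\
  (* (2) *)
  (forall (a : alcf f) (om' : 'M[int]_(f, 2)), LWmu p mu om' ->
      let T := Trnsp p mu sec om' a in
      [/\ pregL p (resW T),
          exists (lam : 'M[int]_(f, 2)) (w : 'I_f -> 'S_3),
            resW T = tw_dotL p lam w (om' + resW (mu - @etaX f)),
          in_alc p (piinv_alc a) (toR (resW T)) &
          exists (nu : 'M[int]_(f, 2)) (w : 'I_f -> 'S_3),
            inLR nu /\
            congrX p T (Wa_dotX p nu w
                          (mu - @etaX f + (sec om' - p%:Z *: piinvM (sec om'))))]) /\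
  (* (3) *)
  (forall (a : alcf f) (om' : 'M[int]_(f, 2)),
      let T := Trnsp p mu sec om' a in
      resZ (T - mu + @etaX f) = resZ (T - mu) /\
      exists y : 'M[int]_(f, 1), resZ (T - mu) = p%:Z *: y - piM y).
Proof.
have Key : forall a om', exists om nu w, decomp p om' a (om, nu, w) /\
   Trnsp p mu sec om' a = wt_dotX p w (- piinvM (sec om)) (mu - etaX f + can nu + sec om) /\
   resW (Trnsp p mu sec om' a) = wt_dotL p w (- piinvM om) (om' + resW (mu - etaX f)) /\
   toR (resW (Trnsp p mu sec om' a)) = wt_dotL p w (toR (- piinvM om)) (toR (om' + resW (mu - etaX f))).
  move=> a om'; have [om [nu [w [Hd HT]]]] := Trnsp_spec p mu sec om' a.
  exists om, nu, w; split => //; split => //.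
  have HR : resW (Trnsp p mu sec om' a) = wt_dotL p w (- piinvM om) (om' + resW (mu - etaX f)).
    case: Hd => Hom Hnu _ _.
    rewrite HT resW_wtX resWN resW_piinv Hsec !resWD Hsec resW_can // Hom.
    congr (wt_dotL _ _ _ _); set z := resW _.
    by apply/matrixP=> i j; rewrite !mxE; ring.
  by split => //; rewrite HR toR_wt.
split; [|split; [|split]].
- move=> om'; have [om [nu [w [[Hom Hnu HW1 HM] [HT [HR HR']]]]]] := Key (@Aunder f) om'.
  split.
  + move=> HL; exists (Trnsp p mu sec om' (@Aunder f)); split.
    * exists 0; rewrite subrr; apply/matrixP=> i j; rewrite !mxE; ring.
    * rewrite /inC0 HR'; apply/(HM _).2; by exists (toR (om' + resW (mu - etaX f))).
  + case=> l' [Hc HC]; move: HC; rewrite /inC0 (resW_congr Hc) HR' => HC.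
    have [x [Hx E]] := (HM _).1 HC.
    by move/wt_inj: E => E; rewrite /LWmu E.
- move=> om' HL; have [om [nu [w [[Hom Hnu HW1 HM] [HT [HR HR']]]]]] := Key (@Aunder f) om'.
  apply: (@preg_of_alc f p (@Aunder f)); rewrite HR'; apply/(HM _).2.
  by exists (toR (om' + resW (mu - etaX f))).
- move=> a om' HL; cbv zeta.
  have [om [nu [w [[Hom Hnu HW1 HM] [HT [HR HR']]]]]] := Key a om'.
  have Hin : in_alc p (piinv_alc a) (toR (resW (Trnsp p mu sec om' a))).
    rewrite HR'; apply/(HM _).2; by exists (toR (om' + resW (mu - etaX f))).
  split.
  + exact: preg_of_alc Hin.
  + by exists (actL w (- piinvM om)), w; rewrite HR wt_tw.
  + exact: Hin.
  + have Hz : resZ (actX w (piinvM (can nu))) = 0.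
      rewrite resZ_actX resZ_piinv resZ_can; by apply/matrixP=> i j; rewrite !mxE.
    have [Hcan Hnu2] := can_resW Hz.
    exists (resW (actX w (piinvM (can nu)))), w; split => //.
    rewrite HT /Wa_dotX Hcan.
    have Hu0 : resW (sec om' - sec om - can nu) = 0.
      by rewrite !resWB !Hsec resW_can // Hom; apply/matrixP=> i j; rewrite !mxE; ring.
    have Hu := resW0_const Hu0.
    exists (piinvM (\matrix_(i, j) (sec om' - sec om - can nu) i (inord 2))).
    move: Hu; move: (sec om) (sec om') (can nu) => S S' C Hu.
    apply/matrixP=> i j; rewrite /wt_dotX.
    have H1 := Hu i ((w i)^-1 j)%g; have H2 := Hu (ordS i) ((w i)^-1 j)%g.
    rewrite !mxE in H1 H2 *; rewrite ord_predK.
    move: H1 H2; set k := ((w i)^-1 j)%g => H1 H2.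
    have E1 : S' i k = S i k + C i k + (S' i (inord 2) - S i (inord 2) - C i (inord 2)) by rewrite -H1; ring.
    have E2 : S' (ordS i) k = S (ordS i) k + C (ordS i) k + (S' (ordS i) (inord 2) - S (ordS i) (inord 2) - C (ordS i) (inord 2)) by rewrite -H2; ring.
    rewrite E1 E2.
    ring.
- move=> a om'; cbv zeta.
  have [om [nu [w [Hd HT]]]] := Trnsp_spec p mu sec om' a.
  rewrite HT; split.
  + by rewrite !resZD resZ_eta addr0.
  + exists (- piinvM (resZ (sec om))).
    rewrite /wt_dotX !(resZB, resZD, resZN, resZZ, resZ_actX, resZ_eta, resZ_piinv, resZ_can).
    set r := resZ (sec om); set m := resZ mu.
    by apply/matrixP=> i j; rewrite !mxE ord_predK; ring.
Qed.
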